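(* For any growth control function $g$ and any strictly increasing sequence of integers $(p_j)_{j\in\mathbb{N}_0}$ with $p_0=0$, there exists a weight sequence $\boldsymbol{M}=(M_p)_p$, with quotients $m_p=M_{p+1}/M_p$, such that (i) $m_p\le g(p)$ for all $p\in\mathbb{N}_0$, and (ii) $m_{p_j}=g(p_j)$ for all $j\in\mathbb{N}_0$.
   Context: A growth control function is a strictly increasing function $g\colon[0,\infty)\to[1,\infty)$ with $g(0)=1$ and $\lim_{t\to\infty}g(t)=\infty$. A weight sequence is a sequence $\boldsymbol{M}=(M_p)_{p\in\mathbb{N}_0}$ of positive reals with $M_0=1$, $M_p^2\le M_{p-1}M_{p+1}$ for $p\ge1$, and $m_p=M_{p+1}/M_p\to\infty$. *)

(* Defs.v *)
From Stdlib Require Import Reals.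
Open Scope R_scope.

(* Growth control function g : [0,oo) -> [1,oo), strictly increasing,
   g 0 = 1, g t -> +oo.  Represented as a total function R -> R whose
   relevant properties are required on [0,oo) only. *)
Definition growth_control (g : R -> R) : Prop :=
  (forall t, 0 <= t -> 1 <= g t) /\
  (forall s t, 0 <= s -> s < t -> g s < g t) /\
  g 0 = 1 /\
  (forall K : R, exists T : R, 0 <= T /\ forall t, T <= t -> K <= g t).

Definition quot (M : nat -> R) (p : nat) : R := M (S p) / M p.

Definition weight_sequence (M : nat -> R) : Prop :=
  (forall p, 0 < M p) /\
  M 0%nat = 1 /\
  (forall p, (1 <= p)%nat -> M p ^ 2 <= M (p - 1)%nat * M (p + 1)%nat) /\
  (forall K : R, exists N : nat, forall p, (N <= p)%nat -> K <= quot M p).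

(* Main.v *)
Require Import Defs.
From Stdlib Require Import Reals.
From Stdlib Require Import Lra Lia ClassicalDescription.
Open Scope R_scope.

Section S.
Variable g : R -> R.
Variable pj : nat -> nat.

Fixpoint mm (p : nat) : R :=
  match p with
  | O => g 0
  | S q => if excluded_middle_informative (exists j, pj j = S q)
           then g (INR (S q)) else mm q
  end.

Fixpoint MM (p : nat) : R :=
  match p with
  | O => 1
  | S q => MM q * mm q
  end.

Hypothesis Hg : growth_control g.

Lemma mm_ge1 p : 1 <= mm p.
Proof.
  destruct Hg as [H1 [H2 [H3 H4]]].
  induction p; cbn [mm].
  - lra.
  - destruct excluded_middle_informative; auto. apply H1, pos_INR.
Qed.

Lemma mm_le p : mm p <= g (INR p).
Proof.
  destruct Hg as [H1 [H2 [H3 H4]]].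
  induction p; cbn [mm].
  - right; reflexivity.
  - destruct excluded_middle_informative; [lra|].
    assert (g (INR p) < g (INR (S p))).
    { apply H2. apply pos_INR. rewrite S_INR; lra. }
    lra.
Qed.

Lemma mm_S p : mm p <= mm (S p).
Proof.
  destruct Hg as [H1 [H2 [H3 H4]]].
  cbn [mm]. destruct excluded_middle_informative; [|lra].
  pose proof (mm_le p).
  assert (g (INR p) < g (INR (S p))).
  { apply H2. apply pos_INR. rewrite S_INR; lra. }
  lra.
Qed.

Lemma mm_mono p q : (p <= q)%nat -> mm p <= mm q.
Proof.
  induction 1; [lra|]. pose proof (mm_S m). lra.
Qed.

Lemma MM_pos p : 0 < MM p.
Proof.
  induction p; cbn [MM]; [lra|]. pose proof (mm_ge1 p). nra.
Qed.

Lemma quot_MM p : quot MM p = mm p.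
Proof.
  unfold quot; cbn [MM]. pose proof (MM_pos p). field. lra.
Qed.

End S.

Theorem proposition4p8 (g : R -> R) (pj : nat -> nat) :
  growth_control g ->
  (forall j k, (j < k)%nat -> (pj j < pj k)%nat) ->
  pj 0%nat = 0%nat ->
  exists M : nat -> R,
    weight_sequence M /\
    (forall p : nat, quot M p <= g (INR p)) /\
    (forall j : nat, quot M (pj j) = g (INR (pj j))).
Proof.
  intros Hg Hinc H0.
  assert (Hfix : forall j, mm g pj (pj j) = g (INR (pj j))).
  { intro j. destruct (pj j) eqn:E; cbn [mm]; [reflexivity|].
    destruct excluded_middle_informative as [_|n0]; [reflexivity|].
    exfalso; apply n0; eauto. }
  assert (Hge : forall j, (j <= pj j)%nat).
  { induction j; [lia|]. specialize (Hinc j (S j) (Nat.lt_succ_diag_r j)). lia. }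
  exists (MM g pj). split; [|split].
  - split; [|split; [|split]].
    + apply MM_pos; auto.
    + reflexivity.
    + intros p Hp. destruct p as [|q]; [lia|].
      replace (S q - 1)%nat with q by lia.
      replace (S q + 1)%nat with (S (S q)) by lia.
      cbn [MM].
      pose proof (MM_pos g pj Hg q). pose proof (mm_ge1 g pj Hg q).
      pose proof (mm_S g pj Hg (S q)). pose proof (mm_S g pj Hg q).
      cbn [MM] in *.
      set (a := MM g pj q) in *. set (b := mm g pj q) in *.
      set (c := mm g pj (S q)) in *.
      assert (0 < a * a * b) by (apply Rmult_lt_0_compat; [apply Rmult_lt_0_compat|]; lra).
      assert (a * b * (a * b) <= a * (a * b * c)).
      { replace (a * b * (a * b)) with (a*a*b*b) by ring.
        replace (a * (a * b * c)) with (a*a*b*c) by ring.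
        apply Rmult_le_compat_l; lra. }
      lra.
    + intro K. destruct Hg as [H1 [H2 [H3 H4]]].
      destruct (H4 K) as [T [HT0 HT]].
      destruct (INR_unbounded T) as [j Hj].
      exists (pj j). intros p Hp.
      rewrite quot_MM by (split; auto).
      pose proof (mm_mono g pj (conj H1 (conj H2 (conj H3 H4))) _ _ Hp).
      rewrite Hfix in H.
      assert (K <= g (INR (pj j))).
      { apply HT. pose proof (le_INR _ _ (Hge j)). lra. }
      lra.
  - intro p. rewrite quot_MM by auto. apply mm_le; auto.
  - intro j. rewrite quot_MM by auto. apply Hfix.
Qed.
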